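(* Let $c>0$ and $\alpha\in(0,2)$, and let $s_{\alpha,c}$ be the SIGTRON function defined below. Then $s_{\alpha,c}$ has an inflection point $x_{ip}$ lying in the interior of $\mathrm{dom}(\sigma_{\alpha,c})$, given by $$x_{ip}=-\ln_{\alpha,c}\!\left(\frac{c\alpha}{2-\alpha}\right).$$ When $\alpha=1$, $x_{ip}=0$, which is the point where $s_{\alpha,c}=1/2$.
   Context: For $c>0$, $\alpha\ge0$, $\alpha\ne1$, put $c_\alpha=\frac{1}{\alpha-1}c^{1-\alpha}$ and $x_\alpha=\frac{1}{\alpha-1}x^{1-\alpha}$. The extended logarithm is $\ln_{\alpha,c}(x)=\ln(x/c)$ if $\alpha=1$ and $\ln_{\alpha,c}(x)=c_\alpha-x_\alpha$ otherwise (for $x>0$). The extended exponential is $\exp_{\alpha,c}(x)=c\exp(x)$ if $\alpha=1$ and $c\left(1-\frac{x}{c_\alpha}\right)^{1/(1-\alpha)}$ otherwise, with domain $\mathbb R$ if $\alpha=1$, $\{x\ge c_\alpha\}$ if $0\le\alpha<1$, $\{x<c_\alpha\}$ if $\alpha>1$. The extended asymmetric sigmoid is $\sigma_{\alpha,c}(x)=\frac{c}{c+\exp_{\alpha,c}(-x)}$ with domain $\mathbb R$ if $\alpha=1$, $\{x\le-c_\alpha\}$ if $0\le\alpha<1$, $\{x\ge -c_\alpha\}$ if $\alpha>1$ (with $\sigma_{\alpha,c}(-c_\alpha)=0$ for $\alpha>1$). SIGTRON is $s_{\alpha,c}(x)=\sigma_{\alpha,c}(x)$ on $\mathrm{dom}(\sigma_{\alpha,c})$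 and $s_{\alpha,c}(x)=\sigma_P(x)$ otherwise, where $\sigma_P(x)=1$ for $x\ge0$ and $0$ for $x<0$. An inflection point is a point where the second derivative vanishes and the concavity changes. *)

(* Defs.v *)
From Stdlib Require Import Reals Lra.
From Coquelicot Require Import Coquelicot.
Open Scope R_scope.

Definition c_alpha (alpha c : R) : R := Rpower c (1 - alpha) / (alpha - 1).

Definition ext_ln (alpha c x : R) : R :=
  if Req_EM_T alpha 1 then ln (x / c)
  else c_alpha alpha c - c_alpha alpha x.

(* real power b^e for b >= 0; the value 0^e (e > 0) is 0 *)
Definition rpow0 (b e : R) : R := if Rlt_dec 0 b then Rpower b e else 0.

Definition ext_exp (alpha c x : R) : R :=
  if Req_EM_T alpha 1 then c * exp x
  else c * rpow0 (1 - x / c_alpha alpha c) (1 / (1 - alpha)).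

Definition dom_sigma (alpha c x : R) : Prop :=
  if Req_EM_T alpha 1 then True
  else if Rlt_dec alpha 1 then x <= - c_alpha alpha c
  else - c_alpha alpha c <= x.

(* Extended asymmetric sigmoid sigma_{alpha,c}; for alpha > 1 the boundary
   value sigma(-c_alpha) = 0 is set explicitly (there exp_{alpha,c}(-x) = +oo). *)
Definition ext_sigma (alpha c x : R) : R :=
  if Req_EM_T alpha 1 then c / (c + ext_exp alpha c (- x))
  else if Rlt_dec 1 alpha then
    (if Req_EM_T x (- c_alpha alpha c) then 0 else c / (c + ext_exp alpha c (- x)))
  else c / (c + ext_exp alpha c (- x)).

Definition sigma_P (x : R) : R := if Rle_dec 0 x then 1 else 0.

Definition sigtron (alpha c x : R) : R :=
  if Req_EM_T alpha 1 then ext_sigma alpha c x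
  else if Rlt_dec alpha 1 then
    (if Rle_dec x (- c_alpha alpha c) then ext_sigma alpha c x else sigma_P x)
  else
    (if Rle_dec (- c_alpha alpha c) x then ext_sigma alpha c x else sigma_P x).

Definition in_interior (D : R -> Prop) (x : R) : Prop :=
  exists d : R, 0 < d /\ forall y, Rabs (y - x) < d -> D y.

Definition is_inflection_point (f : R -> R) (x : R) : Prop :=
  exists d : R, 0 < d /\
    (forall y, Rabs (y - x) < d -> ex_derive f y /\ ex_derive_n f 2 y) /\
    Derive_n f 2 x = 0 /\
    ( ((forall y, x - d < y < x -> 0 < Derive_n f 2 y) /\
       (forall y, x < y < x + d -> Derive_n f 2 y < 0))
   \/ ((forall y, x - d < y < x -> Derive_n f 2 y < 0) /\
       (forall y, x < y < x + d -> 0 < Derive_n f 2 y)) ).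

(* Main.v *)
Require Import Defs.
From Stdlib Require Import Reals Lra.
From Coquelicot Require Import Coquelicot.
Open Scope R_scope.

Lemma Rpower_pos' x y : 0 < Rpower x y.
Proof. unfold Rpower; apply exp_pos. Qed.

Lemma loc_I x0 d z : x0 - d < z < x0 + d ->
  locally z (fun t => x0 - d < t < x0 + d).
Proof.
  intros Hz.
  assert (He : 0 < Rmin (z - (x0 - d)) (x0 + d - z)) by (apply Rmin_pos; lra).
  exists (mkposreal _ He). intros t Ht.
  unfold ball in Ht; simpl in Ht. unfold AbsRing_ball, abs, minus, plus, opp in Ht; simpl in Ht.
  apply Rabs_def2 in Ht. destruct Ht as [H1 H2].
  pose proof (Rmin_l (z - (x0 - d)) (x0 + d - z)).
  pose proof (Rmin_r (z - (x0 - d)) (x0 + d - z)). lra.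
Qed.

Lemma is_derive_Rpower_comp (u : R -> R) z du a : 0 < u z -> is_derive u z du ->
  is_derive (fun t => Rpower (u t) a) z (a * Rpower (u z) (a - 1) * du).
Proof.
  intros Hp Hd.
  assert (H1 : is_derive (fun x => Rpower x a) (u z) (a * Rpower (u z) (a - 1))).
  { apply is_derive_Reals. apply derivable_pt_lim_power; auto. }
  pose proof (is_derive_comp (fun x => Rpower x a) u z _ _ H1 Hd) as H.
  replace (a * Rpower (u z) (a - 1) * du) with (scal du (a * Rpower (u z) (a - 1))).
  exact H. unfold scal; simpl; unfold mult; simpl. ring.
Qed.

Section Gen.
Variables (f u : R -> R) (m a x0 d : R).
Hypotheses (hm : 0 < m) (ha : 0 < a) (hd : 0 < d).
Hypothesis Hu : forall z, x0 - d < z < x0 + d ->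
  0 < u z /\ is_derive u z (- m * Rpower (u z) a).
Hypothesis Hf : forall z, x0 - d < z < x0 + d -> f z = 1 / (1 + u z).

Definition g1 z := m * Rpower (u z) a / (1 + u z) ^ 2.
Definition g2 z := - (m ^ 2 * Rpower (u z) a * Rpower (u z) (a - 1)) * (a + (a - 2) * u z) / (1 + u z) ^ 3.

Lemma d1 z : x0 - d < z < x0 + d -> is_derive f z (g1 z).
Proof.
  intros Hz. destruct (Hu z Hz) as [Hp Hd'].
  apply is_derive_ext_loc with (fun t => 1 / (1 + u t)).
  { destruct (loc_I x0 d z Hz) as [e He]. exists e. intros t Ht. symmetry. apply Hf, He, Ht. }
  assert (H := is_derive_div (fun _ => 1) (fun t => 1 + u t) z 0 (0 + - m * Rpower (u z) a)
     (is_derive_const 1 z) (is_derive_plus _ _ _ _ _ (is_derive_const 1 z) Hd')).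
  assert (1 + u z <> 0) by lra.
  specialize (H H0). unfold g1. 
  replace (m * Rpower (u z) a / (1 + u z) ^ 2) with
    ((0 * (1 + u z) - 1 * (0 + - m * Rpower (u z) a)) / (1 + u z) ^ 2) by (field; auto).
  exact H.
Qed.

Lemma d2 z : x0 - d < z < x0 + d -> is_derive g1 z (g2 z).
Proof.
  intros Hz. destruct (Hu z Hz) as [Hp Hd'].
  unfold g1.
  assert (HN := is_derive_scal _ z m _ (is_derive_Rpower_comp u z _ a Hp Hd')).
  assert (HD := is_derive_pow (fun t => 1 + u t) 2 z _ (is_derive_plus _ _ _ _ _ (is_derive_const 1 z) Hd')).
  assert (1 + u z <> 0) by lra.
  assert (H1 := is_derive_div _ _ z _ _ HN HD (pow_nonzero _ 2 H)).
  assert (HP : Rpower (u z) a = Rpower (u z) (a - 1) * u z).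
  { rewrite <- (Rpower_1 (u z)) at 3 by auto. rewrite <- Rpower_plus. f_equal. ring. }
  unfold g2. replace (- (m ^ 2 * Rpower (u z) a * Rpower (u z) (a - 1)) * (a + (a - 2) * u z) / (1 + u z) ^ 3)
   with ((m * (a * Rpower (u z) (a - 1) * (- m * Rpower (u z) a)) * (1 + u z) ^ 2 -
        m * Rpower (u z) a * (INR 2 * (0 + - m * Rpower (u z) a) * (1 + u z) ^ Init.Nat.pred 2)) /
       ((1 + u z) ^ 2) ^ 2).
  exact H1.
  rewrite HP. simpl. field. auto.
Qed.

Lemma Dn2 z : x0 - d < z < x0 + d -> ex_derive f z /\ ex_derive_n f 2 z /\ Derive_n f 2 z = g2 z.
Proof.
  intros Hz.
  assert (Hloc : locally z (fun t => Derive f t = g1 t)).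
  { destruct (loc_I x0 d z Hz) as [e He]. exists e. intros t Ht.
    apply is_derive_unique, d1, He, Ht. }
  split. { eexists; apply d1; auto. }
  split.
  - simpl. apply ex_derive_ext_loc with g1.
    { destruct Hloc as [e He]. exists e. intros t Ht. symmetry. apply He, Ht. }
    eexists; apply d2; auto.
  - simpl. rewrite (Derive_ext_loc _ g1 z).
    + apply is_derive_unique, d2; auto.
    + exact Hloc.
Qed.

Lemma udecr y1 y2 : x0 - d < y1 -> y1 < y2 -> y2 < x0 + d -> u y2 < u y1.
Proof.
  intros H1 H2 H3.
  cut (- u y1 < - u y2). lra.
  apply (incr_function (fun t => - u t) (x0 - d) (x0 + d) (fun t => m * Rpower (u t) a)); simpl; auto.
  - intros x Hx1 Hx2. destruct (Hu x (conj Hx1 Hx2)) as [_ Hd'].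
    replace (m * Rpower (u x) a) with (- (- m * Rpower (u x) a)) by ring.
    exact (is_derive_opp _ _ _ Hd').
  - intros x _ _. apply Rmult_lt_0_compat; auto. apply Rpower_pos'.
Qed.
End Gen.

Lemma gen_main (f u : R -> R) (m a x0 d : R) (D : R -> Prop) :
  0 < m -> 0 < a -> a < 2 -> 0 < d ->
  (forall z, x0 - d < z < x0 + d -> 0 < u z /\ is_derive u z (- m * Rpower (u z) a)) ->
  (forall z, x0 - d < z < x0 + d -> f z = 1 / (1 + u z)) ->
  u x0 = a / (2 - a) ->
  (forall z, x0 - d < z < x0 + d -> D z) ->
  in_interior D x0 /\ is_inflection_point f x0.
Proof.
  intros hm ha ha2 hd Hu Hf Hx0 HD.
  assert (Hab : forall y, Rabs (y - x0) < d -> x0 - d < y < x0 + d).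
  { intros y Hy. apply Rabs_def2 in Hy. lra. }
  split.
  { exists d. split; auto. }
  exists d. split; auto. split.
  { intros y Hy. destruct (Dn2 f u m a x0 d Hu Hf y (Hab y Hy)) as [? [? ?]]; auto. }
  assert (HS : forall y, x0 - d < y < x0 + d ->
     Derive_n f 2 y = - (m ^ 2 * Rpower (u y) a * Rpower (u y) (a - 1)) * ((2 - a) * (a / (2 - a) - u y)) / (1 + u y) ^ 3).
  { intros y Hy. destruct (Dn2 f u m a x0 d Hu Hf y Hy) as [_ [_ ->]]. unfold g2. destruct (Hu y Hy) as [Hp _]. field. split; lra. }
  assert (Hpos : forall y, x0 - d < y < x0 + d -> 0 < m ^ 2 * Rpower (u y) a * Rpower (u y) (a - 1) /\ 0 < (1 + u y) ^ 3).
  { intros y Hy. destruct (Hu y Hy) as [Hp _]. split.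
    - apply Rmult_lt_0_compat; [apply Rmult_lt_0_compat|]; [apply pow_lt; auto| apply Rpower_pos' | apply Rpower_pos'].
    - apply pow_lt; lra. }
  split.
  { rewrite HS by lra. rewrite Hx0. replace (a / (2 - a) - a / (2 - a)) with 0 by ring. field.
    destruct (Hu x0) as [Hp _]; lra. }
  left. split.
  - intros y Hy. assert (Hy' : x0 - d < y < x0 + d) by lra. rewrite HS by auto.
    destruct (Hpos y Hy') as [P1 P2].
    assert (u x0 < u y) by (apply (udecr u m a x0 d hm Hu); lra).
    rewrite <- Hx0. unfold Rdiv. apply Rmult_lt_0_compat; [| apply Rinv_0_lt_compat; auto]. assert (0 < (2 - a) * (u y - u x0)) by (apply Rmult_lt_0_compat; lra). nra.
  - intros y Hy. assert (Hy' : x0 - d < y < x0 + d) by lra. rewrite HS by auto.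
    destruct (Hpos y Hy') as [P1 P2].
    assert (u y < u x0) by (apply (udecr u m a x0 d hm Hu); lra).
    rewrite <- Hx0. unfold Rdiv. assert (0 < (2 - a) * (u x0 - u y)) by (apply Rmult_lt_0_compat; lra).
    assert (0 < / (1 + u y) ^ 3) by (apply Rinv_0_lt_compat; auto).
    assert (0 < m ^ 2 * Rpower (u y) a * Rpower (u y) (a - 1) * ((2 - a) * (u x0 - u y))) by (apply Rmult_lt_0_compat; auto).
    nra.
Qed.


Lemma case1 (c : R) (hc : 0 < c) :
  let x_ip := - ext_ln 1 c (c * 1 / (2 - 1)) in
  in_interior (dom_sigma 1 c) x_ip /\
  is_inflection_point (sigtron 1 c) x_ip /\
  (1 = 1 -> x_ip = 0 /\ sigtron 1 c x_ip = 1 / 2).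
Proof.
  intros x_ip.
  assert (Hx : x_ip = 0).
  { unfold x_ip, ext_ln. destruct (Req_EM_T 1 1); [|congruence].
    replace (c * 1 / (2 - 1) / c) with 1 by (field; lra). rewrite ln_1; ring. }
  assert (Hsig : forall z, sigtron 1 c z = 1 / (1 + exp (- z))).
  { intros z. unfold sigtron, ext_sigma, ext_exp. destruct (Req_EM_T 1 1); [|congruence].
    pose proof (exp_pos (- z)). field. split; nra. }
  destruct (gen_main (sigtron 1 c) (fun z => exp (- z)) 1 1 x_ip 1 (dom_sigma 1 c)) as [A B];
    try lra.
  - intros z _. split. apply exp_pos. rewrite Rpower_1 by apply exp_pos.
    auto_derive; auto. idtac.
  - intros z _. apply Hsig.
  - rewrite Hx, Ropp_0, exp_0. field.
  - intros z _. unfold dom_sigma. destruct (Req_EM_T 1 1); [trivial|congruence].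
  - split; auto. split; auto. intros _. split; auto. rewrite Hsig, Hx, Ropp_0, exp_0. field.
Qed.

Lemma case2 (c alpha : R) (hc : 0 < c) (ha0 : 0 < alpha) (ha2 : alpha < 2) (ne : alpha <> 1) :
  let x_ip := - ext_ln alpha c (c * alpha / (2 - alpha)) in
  in_interior (dom_sigma alpha c) x_ip /\
  is_inflection_point (sigtron alpha c) x_ip.
Proof.
  intros x_ip.
  assert (HC : 0 < Rpower c (1 - alpha)) by apply Rpower_pos'.
  assert (Hne : alpha - 1 <> 0) by lra.
  assert (Hne' : 1 - alpha <> 0) by lra.
  remember (c_alpha alpha c) as ca eqn:Hca.
  assert (Hca0 : ca <> 0).
  { rewrite Hca; unfold c_alpha. unfold Rdiv. apply Rmult_integral_contrapositive; split; [lra|].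
    apply Rinv_neq_0_compat; auto. }
  set (r := alpha / (2 - alpha)).
  assert (Hr : 0 < r) by (unfold r; apply Rdiv_lt_0_compat; lra).
  set (p := 1 / (1 - alpha)).
  set (t := fun z => 1 - - z / ca).
  set (u := fun z => Rpower (t z) p).
  set (m := / Rpower c (1 - alpha)).
  set (t0 := Rpower r (1 - alpha)).
  assert (Ht0p : 0 < t0) by apply Rpower_pos'.
  assert (Ht0 : t x_ip = t0).
  { unfold x_ip, ext_ln. destruct (Req_EM_T alpha 1); [congruence|].
    rewrite <- Hca. unfold t, t0.
    replace (c * alpha / (2 - alpha)) with (c * r) by (unfold r; field; lra).
    rewrite Hca. unfold c_alpha. rewrite <- Rpower_mult_distr by lra. field. lra. }
  set (d := t0 * Rabs ca / 2).
  assert (Hd : 0 < d).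
  { unfold d. assert (0 < Rabs ca) by (apply Rabs_pos_lt; auto). nra. }
  assert (Htp : forall z, x_ip - d < z < x_ip + d -> 0 < t z).
  { intros z Hz.
    assert (E : t z = t x_ip + (z - x_ip) / ca) by (unfold t; field; auto).
    rewrite E, Ht0.
    assert (Hab : Rabs (z - x_ip) < d) by (apply Rabs_def1; lra).
    assert (HA : 0 < Rabs ca) by (apply Rabs_pos_lt; auto).
    assert (Rabs ((z - x_ip) / ca) < t0 / 2).
    { rewrite Rabs_div by auto. unfold Rdiv.
      assert (Rabs ca * / Rabs ca = 1) by (field; lra).
      assert (0 < / Rabs ca) by (apply Rinv_0_lt_compat; auto).
      unfold d in Hab. nra. }
    apply Rabs_def2 in H. lra. }
  assert (Hdom : forall z, 0 < t z ->
     (alpha < 1 -> z < - ca) /\ (1 < alpha -> - ca < z)).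
  { intros z Hz. unfold t in Hz.
    assert (Ez : z / ca * ca = z) by (field; auto).
    split; intros Ha.
    - assert (ca < 0).
      { rewrite Hca; unfold c_alpha, Rdiv.
        assert (/ (alpha - 1) < 0) by (apply Rinv_lt_0_compat; lra). nra. }
      nra.
    - assert (0 < ca).
      { rewrite Hca; unfold c_alpha, Rdiv.
        assert (0 < / (alpha - 1)) by (apply Rinv_0_lt_compat; lra). nra. }
      nra. }
  apply (gen_main (sigtron alpha c) u m alpha x_ip d (dom_sigma alpha c)); auto.
  - unfold m. apply Rinv_0_lt_compat; auto.
  - intros z Hz. pose proof (Htp z Hz) as Hp. split. apply Rpower_pos'.
    assert (Hdt : is_derive t z (1 / ca)).
    { unfold t. auto_derive; auto. field; auto. }
    pose proof (is_derive_Rpower_comp t z _ p Hp Hdt) as H.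
    unfold u. replace (- m * Rpower (Rpower (t z) p) alpha) with (p * Rpower (t z) (p - 1) * (1 / ca)).
    exact H.
    rewrite Rpower_mult. replace (p * alpha) with (p - 1) by (unfold p; field; auto).
    unfold m, p. rewrite Hca. unfold c_alpha. field. lra.
  - intros z Hz. pose proof (Htp z Hz) as Hp. destruct (Hdom z Hp) as [D1 D2].
    assert (HP : 0 < Rpower (t z) p) by apply Rpower_pos'.
    unfold sigtron, ext_sigma, ext_exp, rpow0.
    destruct (Req_EM_T alpha 1); [congruence|]. rewrite <- Hca.
    destruct (Rlt_dec 0 (1 - - z / ca)) as [Hq|Hq];
      [| exfalso; apply Hq; exact Hp].
    destruct (Rlt_dec alpha 1) as [H1|H1].
    + destruct (Rle_dec z (- ca)); [|specialize (D1 H1); lra].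
      destruct (Rlt_dec 1 alpha); [lra|].
      unfold u, t. fold p. field. unfold t in HP. split; nra.
    + destruct (Rle_dec (- ca) z); [|assert (1 < alpha) by lra; specialize (D2 H); lra].
      destruct (Rlt_dec 1 alpha); [|lra].
      destruct (Req_EM_T z (- ca)); [specialize (D2 r1); lra|].
      unfold u, t. fold p. field. unfold t in HP. split; nra.
  - unfold u. rewrite Ht0. unfold t0. rewrite Rpower_mult.
    replace ((1 - alpha) * p) with 1 by (unfold p; field; auto). apply Rpower_1; auto.
  - intros z Hz. pose proof (Htp z Hz) as Hp. destruct (Hdom z Hp) as [D1 D2].
    unfold dom_sigma. destruct (Req_EM_T alpha 1); [congruence|]. rewrite <- Hca.
    destruct (Rlt_dec alpha 1) as [H1|H1].
    + specialize (D1 H1); lra.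
    + assert (1 < alpha) by lra. specialize (D2 H); lra.
Qed.

Theorem corollary1 (c alpha : R) (hc : 0 < c) (ha0 : 0 < alpha) (ha2 : alpha < 2) :
  let x_ip := - ext_ln alpha c (c * alpha / (2 - alpha)) in
  in_interior (dom_sigma alpha c) x_ip /\
  is_inflection_point (sigtron alpha c) x_ip /\
  (alpha = 1 -> x_ip = 0 /\ sigtron alpha c x_ip = 1 / 2).
Proof.
  destruct (Req_EM_T alpha 1) as [e|ne].
  - subst alpha. apply case1; auto.
  - intros x_ip. destruct (case2 c alpha hc ha0 ha2 ne) as [A B].
    split; auto. split; auto. intros e; congruence.
Qed.
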